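(* For $k\geq1$ (resp. $k\geq2$), the $3$-valent $(2k,0)$-cluster $\triangle(2k)$ has eigenvalue $4$ (resp. $2$) as a $D_3$-invariant eigenvalue, with multiplicity (as $D_3$-invariant eigenvalue) at least $\lceil k/2\rceil$ (resp. $\lfloor k/2\rfloor$); that is, the space of $D_3$-invariant functions $u$ on $V(\triangle(2k))$ with $\Delta_{\triangle(2k)}u=4u$ (resp. $=2u$) has dimension at least $\lceil k/2\rceil$ (resp. $\lfloor k/2\rfloor$).
   Context: With $\omega=e^{\pi i/3}$, the $3$-valent $(m,0)$-cluster $\triangle(m)$ is the graph whose vertices are the barycenters of the $m^2$ unit triangles of the triangular lattice $\mathbb{Z}[\omega]$ contained in the triangle with vertices $0,m,m\omega$, two being adjacent when the triangles share an edge. Its Laplacian eigen-equation is considered with the Neumann-type convention $(\Delta_{\triangle(m)}u)(x)=3u(x)-\sum_{y\sim x}u(y)-(3-\deg(x))u(x)$, i.e. $(\Delta_{\triangle(m)}u)(x)=\deg_{\triangle(m)}(x)u(x)-\sum_{y\sim x}u(y)$. The dihedral group $D_3$ of symmetries of the triangle acts on $V(\triangle(m))$; a function $u$ is $D_3$-invariant if $u(\sigma x)=u(x)$ for all $\sigma\in D_3$ and all $x$. *)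

(* Defs.v *)
From HB Require Import structures.
From mathcomp Require Import all_boot all_order all_algebra perm.
Set Implicit Arguments. Unset Strict Implicit. Unset Printing Implicit Defensive.
Import Order.TTheory GRing.Theory Num.Theory.

(* Encoding of the unit triangles of the lattice Z[w] inside the triangle with
   vertices 0, m, m w.  A point z = a + b w of the big triangle has the three
   "distances to the sides" (a, b, m - a - b) (barycentric coordinates scaled
   by m).  A unit triangle is determined by the integer parts (x_0,x_1,x_2) of
   these coordinates at its interior points:
     - upward triangle with vertices a+bw, a+1+bw, a+(b+1)w  <->  (a, b, m-1-a-b),
       coordinate sum m-1;
     - downward triangle with vertices a+1+bw, a+(b+1)w, a+1+(b+1)w
       <->  (a, b, m-2-a-b), coordinate sum m-2.
   Two unit triangles share an edge iff one is upward, x, and the other is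
   x - e_i for some i.  The dihedral group D_3 of symmetries of the big
   triangle acts by permuting the three coordinates (full S_3 action). *)

Definition tri_pred (m : nat) : pred {ffun 'I_3 -> 'I_m} :=
  fun x => ((\sum_i (x i : nat)).+1 == m) || ((\sum_i (x i : nat)).+2 == m).

Notation tri_vert m := {x : {ffun 'I_3 -> 'I_m} | @tri_pred m x}.

Definition tri_adj0 (m : nat) (x y : {ffun 'I_3 -> 'I_m}) : bool :=
  [exists i : 'I_3, [forall j : 'I_3, (x j : nat) == (y j + (i == j))%N]].

Definition tri_adj (m : nat) (x y : tri_vert m) : bool :=
  tri_adj0 (val x) (val y) || tri_adj0 (val y) (val x).

Definition tri_deg (m : nat) (x : tri_vert m) : nat := #|[pred y | tri_adj x y]|.

Definition tri_lap (R : numFieldType) (m : nat) (u : tri_vert m -> R)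
    (x : tri_vert m) : R :=
  ((tri_deg x)%:R * u x - \sum_(y : tri_vert m | tri_adj x y) u y)%R.

Definition D3_invariant (R : Type) (m : nat) (u : tri_vert m -> R) : Prop :=
  forall (s : {perm 'I_3}) (x y : tri_vert m),
    (forall i, val y i = val x (s i)) -> u y = u x.

Definition D3_eig_dim_ge (R : numFieldType) (m : nat) (lam : R) (d : nat) : Prop :=
  exists u : 'I_d -> tri_vert m -> R,
    (forall i, D3_invariant (u i) /\ forall x, tri_lap (u i) x = (lam * u i x)%R)
    /\ (forall c : 'I_d -> R,
          (forall x, (\sum_(i < d) c i * u i x)%R = 0%R) -> forall i, c i = 0%R).

(* Main.v *)
Require Import Defs.
From HB Require Import structures.
From mathcomp Require Import all_boot all_order all_algebra perm.
From mathcomp Require Import zify ring lra.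
Set Implicit Arguments. Unset Strict Implicit. Unset Printing Implicit Defensive.
Import Order.TTheory GRing.Theory Num.Theory.
Local Open Scope ring_scope.

Lemma odd_lia n : odd n = (n %% 2 == 1)%N.
Proof. by rewrite modn2; case: odd. Qed.

Ltac oddtac := rewrite ?odd_lia;
  repeat match goal with
  | h : is_true (odd _) |- _ => rewrite odd_lia in h; move/eqP in h
  | h : is_true (~~ odd _) |- _ => rewrite odd_lia in h; move/eqP in h
  end; first [apply/eqP | idtac]; lia.

Section Fun.
Variable R : realFieldType.
Variables (k j : nat) (s : R).
Hypotheses (hs : s = 1 \/ s = -1) (hj : odd j) (hj1 : (0 < j)%N) (hjk : (j < 2 * k)%N).

Definition W (t : nat) : R := (t == j)%:R + s * (t == (2 * k - j)%N)%:R.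
Definition E (t : nat) : R := (-1) ^+ t.
Definition fc (a b c : nat) := W a * E b + W b * E c + W c * E a.
Definition Uc (a b c : nat) := if (a + b + c + 1 == 2 * k)%N then fc a b c
   else - s * (fc a.+1 b c + fc a b.+1 c + fc a b c.+1).

Lemma W0 : W 0 = 0.
Proof.
rewrite /W; have -> : (0 == j)%N = false by apply/eqP; lia.
have -> : (0 == (2 * k - j))%N = false by apply/eqP; lia.
by rewrite mulr0 addr0.
Qed.

Lemma Wodd t : ~~ odd t -> W t = 0.
Proof.
move=> ht; rewrite /W.
have -> : (t == j)%N = false by apply/eqP => E; move: ht; rewrite E hj.
have -> : (t == (2 * k - j)%N)%N = false.
  apply/eqP => E; move: ht hj; rewrite E !odd_lia => /eqP h1 /eqP h2; lia.
by rewrite mulr0 addr0.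
Qed.

Lemma Wrefl t u : (t + u = 2 * k)%N -> W u = s * W t.
Proof.
move=> h; rewrite /W.
have -> : (u == j) = (t == (2 * k - j)%N) by apply/eqP/eqP; lia.
have -> : (u == (2 * k - j)%N) = (t == j) by apply/eqP/eqP; lia.
by case: hs => ->; ring.
Qed.

Lemma ES t : E t.+1 = - E t.
Proof. by rewrite /E exprS mulN1r. Qed.
Lemma E0 : E 0 = 1.
Proof. by rewrite /E expr0. Qed.
Lemma Eeven t : ~~ odd t -> E t = 1.
Proof. by move=> h; rewrite /E -signr_odd (negbTE h) expr0. Qed.
Lemma Eodd t : odd t -> E t = -1.
Proof. by move=> h; rewrite /E -signr_odd h expr1. Qed.

Lemma WEs a b c : odd (a + b + c) -> W a * E b = W a * E c.
Proof.
move=> h; case: (boolP (odd a)) => ha; last by rewrite Wodd // !mul0r.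
case: (boolP (odd b)) => hb.
  have hc : odd c by move: h ha hb; rewrite !odd_lia => /eqP ? /eqP ? /eqP ?; apply/eqP; lia.
  by rewrite (Eodd hb) (Eodd hc).
have hc : ~~ odd c by move: h ha hb; rewrite !odd_lia => /eqP ? /eqP ? /eqP ?; apply/eqP; lia.
by rewrite (Eeven hb) (Eeven hc).
Qed.

Lemma fc_rot a b c : fc b c a = fc a b c.
Proof. rewrite /fc; ring. Qed.

Lemma fc_swap a b c : odd (a + b + c) -> fc b a c = fc a b c.
Proof.
move=> h; rewrite /fc (WEs (a:=a) (b:=c) (c:=b)); last by move: h; rewrite !odd_lia => /eqP ?; apply/eqP; lia.
rewrite (WEs (a:=b) (b:=a) (c:=c)); last by move: h; rewrite !odd_lia => /eqP ?; apply/eqP; lia.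
rewrite (WEs (a:=c) (b:=b) (c:=a)); last by move: h; rewrite !odd_lia => /eqP ?; apply/eqP; lia.
ring.
Qed.

Lemma Uc_up a b c : (a + b + c + 1 = 2 * k)%N -> Uc a b c = fc a b c.
Proof. by move=> h; rewrite /Uc h eqxx. Qed.
Lemma Uc_dn a b c : (a + b + c + 2 = 2 * k)%N ->
  Uc a b c = - s * (fc a.+1 b c + fc a b.+1 c + fc a b c.+1).
Proof. by move=> h; rewrite /Uc ifF //; apply/eqP; lia. Qed.

Lemma core_up a b c : (a + b + c + 1 = 2 * k)%N ->
  ((if (0 < a)%N then 1 else 0) + (if (0 < b)%N then 1 else 0)
     + (if (0 < c)%N then 1 else 0)) * fc a b c
  - ((if (0 < a)%N then Uc a.-1 b c else 0) + (if (0 < b)%N then Uc a b.-1 c else 0)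
     + (if (0 < c)%N then Uc a b c.-1 else 0))
  = (3 + s) * fc a b c.
Proof.
case: a => [|a]; case: b => [|b]; case: c => [|c] => H /=.
- lia.
- rewrite Uc_dn; last lia.
  have ec : ~~ odd c by oddtac.
  rewrite /fc !ES E0 (Eeven ec) W0 (Wodd ec) (@Wrefl 1 c.+1); last lia.
  case: hs => ->; ring.
- rewrite Uc_dn; last lia.
  have ec : ~~ odd b by oddtac.
  rewrite /fc !ES E0 (Eeven ec) W0 (Wodd ec) (@Wrefl 1 b.+1); last lia.
  case: hs => ->; ring.
- rewrite !Uc_dn; try lia.
  rewrite /fc !ES !E0 W0 (@Wrefl b.+1 c.+2); last lia.
  rewrite (@Wrefl c.+1 b.+2); last lia.
  case: (boolP (odd c)) => oc.
    have ob : ~~ odd b by oddtac.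
    have oc1 : ~~ odd c.+1 by oddtac.
    rewrite (Eeven ob) (Eodd oc) (Wodd ob) (Wodd oc1).
    case: hs => ->; ring.
  have ob : odd b by oddtac.
  have ob1 : ~~ odd b.+1 by oddtac.
  rewrite (Eodd ob) (Eeven oc) (Wodd oc) (Wodd ob1).
  case: hs => ->; ring.
- rewrite Uc_dn; last lia.
  have ec : ~~ odd a by oddtac.
  rewrite /fc !ES E0 (Eeven ec) W0 (Wodd ec) (@Wrefl 1 a.+1); last lia.
  case: hs => ->; ring.
- rewrite !Uc_dn; try lia.
  rewrite /fc !ES !E0 W0 (@Wrefl a.+1 c.+2); last lia.
  rewrite (@Wrefl c.+1 a.+2); last lia.
  case: (boolP (odd c)) => oc.
    have ob : ~~ odd a by oddtac.
    have oc1 : ~~ odd c.+1 by oddtac.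
    rewrite (Eeven ob) (Eodd oc) (Wodd ob) (Wodd oc1).
    case: hs => ->; ring.
  have ob : odd a by oddtac.
  have ob1 : ~~ odd a.+1 by oddtac.
  rewrite (Eodd ob) (Eeven oc) (Wodd oc) (Wodd ob1).
  case: hs => ->; ring.
- rewrite !Uc_dn; try lia.
  rewrite /fc !ES !E0 W0 (@Wrefl a.+1 b.+2); last lia.
  rewrite (@Wrefl b.+1 a.+2); last lia.
  case: (boolP (odd b)) => oc.
    have ob : ~~ odd a by oddtac.
    have oc1 : ~~ odd b.+1 by oddtac.
    rewrite (Eeven ob) (Eodd oc) (Wodd ob) (Wodd oc1).
    case: hs => ->; ring.
  have ob : odd a by oddtac.
  have ob1 : ~~ odd a.+1 by oddtac.
  rewrite (Eodd ob) (Eeven oc) (Wodd oc) (Wodd ob1).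
  case: hs => ->; ring.
- rewrite !Uc_dn; try lia.
  rewrite /fc !ES; ring.
Qed.

Lemma core_dn a b c : (a + b + c + 2 = 2 * k)%N ->
  3 * Uc a b c - (Uc a.+1 b c + Uc a b.+1 c + Uc a b c.+1) = (3 + s) * Uc a b c.
Proof.
move=> H; rewrite Uc_dn // !Uc_up; try lia.
case: hs => ->; ring.
Qed.

Definition valid3 (a b c : nat) := (a + b + c + 1 = 2 * k)%N \/ (a + b + c + 2 = 2 * k)%N.

Lemma Uc_swap a b c : valid3 a b c -> Uc b a c = Uc a b c.
Proof.
move=> hv; rewrite /Uc; have -> : (b + a + c = a + b + c)%N by lia.
case: ifP => /eqP h.
  by rewrite fc_swap //; oddtac.
case: hv => hv; first by [].
rewrite (@fc_swap a b.+1 c); last by oddtac.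
rewrite (@fc_swap a.+1 b c); last by oddtac.
rewrite (@fc_swap a b c.+1); last by oddtac.
ring.
Qed.

Lemma Uc_rot a b c : Uc b c a = Uc a b c.
Proof.
rewrite /Uc; have -> : (b + c + a = a + b + c)%N by lia.
rewrite (fc_rot a b c); case: ifP => // _.
rewrite (fc_rot a b.+1 c) (fc_rot a b c.+1) (fc_rot a.+1 b c); ring.
Qed.

End Fun.

Definition i0 : 'I_3 := ord0.
Definition i1 : 'I_3 := Ordinal (isT : (1 < 3)%N).
Definition i2 : 'I_3 := Ordinal (isT : (2 < 3)%N).

Lemma ord3P (i : 'I_3) : i = i0 \/ i = i1 \/ i = i2.
Proof.
case: i => [[|[|[|n]]] Hi]; [left|right;left|right;right|by []]; exact: val_inj.
Qed.

Lemma e01 : (i0 == i1) = false. Proof. by []. Qed.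
Lemma e02 : (i0 == i2) = false. Proof. by []. Qed.
Lemma e10 : (i1 == i0) = false. Proof. by []. Qed.
Lemma e12 : (i1 == i2) = false. Proof. by []. Qed.
Lemma e20 : (i2 == i0) = false. Proof. by []. Qed.
Lemma e21 : (i2 == i1) = false. Proof. by []. Qed.
Definition eI := (e01, e02, e10, e12, e20, e21, eqxx).

Lemma sum3N (F : 'I_3 -> nat) : (\sum_i F i)%N = (F i0 + F i1 + F i2)%N.
Proof.
rewrite !big_ord_recl big_ord0 addn0 addnA.
have -> : lift ord0 ord0 = i1 :> 'I_3 by apply: val_inj.
by have -> : lift ord0 (lift ord0 ord0) = i2 :> 'I_3 by apply: val_inj.
Qed.

Lemma sum3R (R : zmodType) (F : 'I_3 -> R) : \sum_i F i = F i0 + F i1 + F i2.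
Proof.
rewrite !big_ord_recl big_ord0 addr0 addrA.
have -> : lift ord0 ord0 = i1 :> 'I_3 by apply: val_inj.
by have -> : lift ord0 (lift ord0 ord0) = i2 :> 'I_3 by apply: val_inj.
Qed.

Section Graph.
Variable m : nat.
Local Notation FF := {ffun 'I_3 -> 'I_m}.
Local Notation V := (tri_vert m).

Definition S3 (p : FF) := (p i0 + p i1 + p i2)%N.

Lemma tri_predE p : tri_pred p = ((S3 p).+1 == m) || ((S3 p).+2 == m).
Proof. by rewrite /tri_pred sum3N. Qed.

Lemma adj0P (x y : FF) :
  reflect (exists i, forall j, (x j : nat) = (y j + (i == j))%N) (tri_adj0 x y).
Proof.
apply: (iffP existsP) => [[i /forallP h]|[i h]]; exists i.
  by move=> j; apply/eqP/h.
by apply/forallP => j; apply/eqP.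
Qed.

Lemma S3_shift (x y : FF) i :
  (forall j, (y j : nat) = (x j + (i == j))%N) -> S3 y = (S3 x).+1.
Proof.
move=> h; rewrite /S3 !h; case: (ord3P i) => [->|[->|->]]; rewrite !eI /=; lia.
Qed.

Definition dnord (a : 'I_m) (b : bool) : 'I_m :=
  Ordinal (leq_ltn_trans (leq_subr b a) (ltn_ord a)).
Definition dn (x : FF) (i : 'I_3) : FF := [ffun j => dnord (x j) (i == j)].
Definition upf (x : FF) (i : 'I_3) : FF := [ffun j => insubd (x j) (x j + (i == j))%N].

Lemma dnE (x : FF) (i j : 'I_3) : (dn x i j : nat) = (x j - (i == j))%N.
Proof. by rewrite ffunE. Qed.
Lemma upfE (x : FF) (i j : 'I_3) : (x j + (i == j) < m)%N -> (upf x i j : nat) = (x j + (i == j))%N.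
Proof. by move=> h; rewrite ffunE val_insubd h. Qed.

Lemma sum_sig (R : zmodType) (Q : pred FF) (F : FF -> R) :
  \sum_(y : V | Q (val y)) F (val y) = \sum_(y0 | tri_pred y0 && Q y0) F y0.
Proof.
have -> : \sum_(y : V | Q (val y)) F (val y)
   = \sum_(y in [set y : V | Q (val y)]) F (val y) by apply: eq_bigl => y; rewrite inE.
rewrite -big_imset; last by move=> ? ? _ _; apply: val_inj.
apply: eq_bigl => y0; apply/imsetP/andP => [[y]|[p q]].
  by rewrite inE => qy ->; split => //; exact: valP.
by exists (exist _ y0 p) => //; rewrite inE.
Qed.

Lemma S3_dn (x : FF) i : (0 < x i)%N -> (S3 (dn x i)).+1 = S3 x.
Proof.
move=> h; rewrite /S3 !dnE; case: (ord3P i) h => [->|[->|->]]; rewrite !eI /= => h; lia.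
Qed.

Lemma nbr_up (R : zmodType) (x : V) (F : FF -> R) : (S3 (val x)).+1 = m ->
  \sum_(y : V | tri_adj x y) F (val y) = \sum_(i | (0 < val x i)%N) F (dn (val x) i).
Proof.
move=> hx.
rewrite /tri_adj (sum_sig (fun y0 => tri_adj0 (val x) y0 || tri_adj0 y0 (val x))).
rewrite -(big_imset _ (h := dn (val x)) (A := [pred i | (0 < val x i)%N])).
  apply: eq_bigl => y0; apply/andP/imsetP => [[p /orP[/adj0P[i h]|/adj0P[i h]]]|[i hi ->]].
  - have hi : (0 < val x i)%N by rewrite h eqxx; lia.
    exists i => //; apply/ffunP => l; apply: val_inj => /=; by rewrite dnE h addnK.
  - have := S3_shift h; move: p; rewrite tri_predE => /orP[] /eqP; lia.
  - split.
      by rewrite tri_predE; apply/orP; right; rewrite (S3_dn hi) hx.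
    apply/orP; left; apply/adj0P; exists i => l; rewrite dnE.
    case: eqP => [<-|_]; rewrite ?addn0 ?subn0 // subn1 addn1 prednK //; exact: hi.
move=> i1' i2' /= h1 _ /ffunP /(_ i1') /(congr1 (@nat_of_ord m)); rewrite !dnE eqxx.
by case: eqP => // _; rewrite subn0 subn1; move: h1; rewrite inE /= => h1 h2; lia.
Qed.

Lemma nbr_dn (R : zmodType) (x : V) (F : FF -> R) : (S3 (val x)).+2 = m ->
  \sum_(y : V | tri_adj x y) F (val y) = \sum_i F (upf (val x) i).
Proof.
move=> hx.
have hlt : forall l : 'I_3, forall b : bool, (val x l + b < m)%N.
  move=> l b; move: hx; rewrite /S3 => hx; case: (ord3P l) => [->|[->|->]]; case: b; move: hx => /= hx; lia.
rewrite /tri_adj (sum_sig (fun y0 => tri_adj0 (val x) y0 || tri_adj0 y0 (val x))).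
rewrite -(big_imset _ (h := upf (val x)) (A := [pred i | true])).
  apply: eq_bigl => y0; apply/andP/imsetP => [[p /orP[/adj0P[i h]|/adj0P[i h]]]|[i hi ->]].
  - have := S3_shift h; move: p; rewrite tri_predE => /orP[] /eqP; lia.
  - exists i => //; apply/ffunP => l; apply: val_inj => /=; by rewrite upfE // h.
  - have hs : forall l, (upf (val x) i l : nat) = (val x l + (i == l))%N by move=> l; rewrite upfE.
    split.
      by rewrite tri_predE (S3_shift hs) hx eqxx //.
    by apply/orP; right; apply/adj0P; exists i.
move=> i1' i2' _ _ /ffunP /(_ i1') /(congr1 (@nat_of_ord m)); rewrite !upfE // eqxx.
by case: eqP => // _; rewrite addn0 addn1 => h2; lia.
Qed.

End Graph.

Section Main.
Variable R : realFieldType.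
Variables (k j : nat) (s : R).
Hypotheses (hs : s = 1 \/ s = -1) (hj : odd j) (hj1 : (0 < j)%N) (hjk : (j < 2 * k)%N).

Definition uf (x : tri_vert (2 * k)) : R := Uc k j s (val x i0) (val x i1) (val x i2).

Lemma uf_eig x : tri_lap uf x = (3 + s) * uf x.
Proof.
have := valP x; rewrite tri_predE => /orP[/eqP hx|/eqP hx].
- rewrite /tri_lap /tri_deg -sum1_card natr_sum.
  rewrite (@nbr_up _ _ x (fun _ => (1:R))) //.
  rewrite (@nbr_up _ _ x (fun p => Uc k j s (p i0) (p i1) (p i2))) //.
  rewrite big_mkcond sum3R big_mkcond sum3R /= !dnE !eI /= !subn0 !subn1.
  rewrite /uf Uc_up; last by move: hx; rewrite /S3 /=; lia.
  apply: core_up => //; move: hx; rewrite /S3 /=; lia.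
- have hlt : forall l : 'I_3, forall b : bool, (val x l + b < 2 * k)%N.
    move=> l b; move: hx; rewrite /S3 => hx; case: (ord3P l) => [->|[->|->]];
    case: b; move: hx => /= hx; lia.
  rewrite /tri_lap /tri_deg -sum1_card natr_sum.
  rewrite (@nbr_dn _ _ x (fun _ => (1:R))) //.
  rewrite (@nbr_dn _ _ x (fun p => Uc k j s (p i0) (p i1) (p i2))) //.
  rewrite !sum3R /= !upfE; try exact: hlt.
  rewrite !eI /= !addn0 !addn1.
  have H := @core_dn R k j s hs hj hj1 hjk (val x i0) (val x i1) (val x i2).
  rewrite /uf -H; last by move: hx; rewrite /S3 /=; lia.
  congr (_ * _ - _); lra.
Qed.


Lemma uf_inv : D3_invariant uf.
Proof.
move=> p x y h; rewrite /uf !h.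
have hv : valid3 k (val x i0) (val x i1) (val x i2).
  have := valP x; rewrite tri_predE /S3 => /orP[/eqP hx|/eqP hx]; [left|right]; lia.
have hv2 : forall a b c, valid3 k a b c -> valid3 k b a c.
  by move=> a b c; rewrite /valid3; case=> H; [left|right]; lia.
have hv3 : forall a b c, valid3 k a b c -> valid3 k b c a.
  by move=> a b c; rewrite /valid3; case=> H; [left|right]; lia.
have pI := @perm_inj _ p.
have v1 := hv3 _ _ _ hv; have v2 := hv3 _ _ _ v1.
have ne : forall a b c, p a = c -> p b = c -> a != b -> False.
  by move=> a b c e e' /eqP; apply; apply: pI; rewrite e e'.
case: (ord3P (p i0)) => [e0|[e0|e0]]; case: (ord3P (p i1)) => [e1|[e1|e1]];
  try (by case: (ne _ _ _ e0 e1));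
  case: (ord3P (p i2)) => [e2|[e2|e2]];
  try (by case: (ne _ _ _ e0 e2)); try (by case: (ne _ _ _ e1 e2));
  rewrite e0 e1 e2 //.
- rewrite (@Uc_swap R k j s hj hj1 hjk (val x i2) (val x i0) (val x i1)) //.
  by rewrite (Uc_rot s hj hj1 hjk (val x i1) (val x i2) (val x i0)) Uc_rot.
- by rewrite Uc_swap.
- by rewrite Uc_rot.
- by rewrite (Uc_rot s hj hj1 hjk (val x i1) (val x i2) (val x i0)) Uc_rot.
- by rewrite (@Uc_swap R k j s hj hj1 hjk (val x i1) (val x i2) (val x i0)) // Uc_rot.
Qed.


Lemma uf_at (x : tri_vert (2 * k)) : (val x i0 : nat) = 0%N -> odd (val x i1) ->
  (val x i1 + val x i2 + 1 = 2 * k)%N -> uf x = W k j s (val x i1).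
Proof.
move=> h0 ho hsum; rewrite /uf Uc_up; last by rewrite h0.
have ec : ~~ odd (val x i2) by oddtac.
rewrite /fc h0 (W0 s hj hj1 hjk) E0 (Eeven _ ec) (Wodd s hj hj1 hjk ec); ring.
Qed.

End Main.

Lemma mkV m a b c : (a + b + c).+1 = m ->
  exists x : tri_vert m, [/\ (val x i0 : nat) = a, (val x i1 : nat) = b & (val x i2 : nat) = c].
Proof.
move=> h; have h0 : (0 < m)%N by lia.
pose d := Ordinal h0.
pose p : {ffun 'I_3 -> 'I_m} := [ffun i : 'I_3 => insubd d (nth 0%N [:: a; b; c] i)].
have pE : forall i : 'I_3, (p i : nat) = nth 0%N [:: a; b; c] i.
  move=> i; rewrite ffunE val_insubd; case: (ord3P i) => [->|[->|->]] /=;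
  case: ifP => // /negP H; exfalso; apply: H; lia.
have pv : tri_pred p.
  by rewrite tri_predE /S3 !pE /=; apply/orP; left; apply/eqP; lia.
by exists (exist _ p pv); rewrite /= !pE.
Qed.

Lemma half_lt t n : (t < n./2)%N -> (2 * t + 1 < n)%N.
Proof. move=> h; have := odd_double_half n; rewrite -muln2; lia. Qed.



Theorem lemma5p1 (R : realFieldType) (k : nat) :
  ((1 <= k)%N -> D3_eig_dim_ge (R:=R) (2 * k) (4%:R)%R (k.+1)./2) /\
  ((2 <= k)%N -> D3_eig_dim_ge (R:=R) (2 * k) (2%:R)%R k./2).
Proof.
have hs1 : (1 : R) = 1 \/ (1 : R) = -1 by left.
have hs2 : (-1 : R) = 1 \/ (-1 : R) = -1 by right.
split => hk.
- have hjt : forall t : nat, (t < (k.+1)./2)%N ->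
      [/\ odd (2 * t + 1), (0 < 2 * t + 1)%N, (2 * t + 1 < 2 * k)%N & (2 * t + 1 <= k)%N].
    move=> t ht; have h := half_lt ht.
    split; [by oddtac | lia | lia | lia].
  exists (fun t : 'I_(k.+1)./2 => @uf R k (2 * t + 1) 1).
  split.
    move=> t; have [o p l _] := hjt t (ltn_ord t); split; first exact: uf_inv.
    by move=> x; rewrite uf_eig //; lra.
  move=> c hc [t0 t0lt]; have [o p l lk] := hjt t0 t0lt.
  have [x [x0 x1 x2]] := @mkV (2 * k) 0 (2 * t0 + 1) (2 * k - 1 - (2 * t0 + 1)) ltac:(lia).
  have := hc x; rewrite (bigD1 (Ordinal t0lt)) //= big1 ?addr0.
    rewrite uf_at // ?x1 ?x0 //; last by lia.
    rewrite /W eqxx; case: eqP => _ /=; lra.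
  move=> [t tlt] ht /=; have [o' p' l' lk'] := hjt t tlt.
  have htn : t <> t0 by move=> e; move/eqP: ht; apply; apply: val_inj.
  rewrite uf_at // ?x1 ?x0 //; last by lia.
  rewrite /W; have -> : (2 * t0 + 1 == 2 * t + 1)%N = false by apply/eqP; lia.
  have -> : (2 * t0 + 1 == 2 * k - (2 * t + 1))%N = false by apply/eqP; lia.
  by rewrite /= mulr0 addr0 mulr0.
- have hjt : forall t : nat, (t < k./2)%N ->
      [/\ odd (2 * t + 1), (0 < 2 * t + 1)%N, (2 * t + 1 < 2 * k)%N & (2 * t + 1 < k)%N].
    move=> t ht; have h := half_lt ht.
    split; [by oddtac | lia | lia | lia].
  exists (fun t : 'I_k./2 => @uf R k (2 * t + 1) (-1)).
  split.
    move=> t; have [o p l _] := hjt t (ltn_ord t); split; first exact: uf_inv.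
    by move=> x; rewrite uf_eig //; lra.
  move=> c hc [t0 t0lt]; have [o p l lk] := hjt t0 t0lt.
  have [x [x0 x1 x2]] := @mkV (2 * k) 0 (2 * t0 + 1) (2 * k - 1 - (2 * t0 + 1)) ltac:(lia).
  have := hc x; rewrite (bigD1 (Ordinal t0lt)) //= big1 ?addr0.
    rewrite uf_at // ?x1 ?x0 //; last by lia.
    rewrite /W eqxx.
    have -> : (2 * t0 + 1 == 2 * k - (2 * t0 + 1))%N = false by apply/eqP; lia.
    rewrite /=; lra.
  move=> [t tlt] ht /=; have [o' p' l' lk'] := hjt t tlt.
  have htn : t <> t0 by move=> e; move/eqP: ht; apply; apply: val_inj.
  rewrite uf_at // ?x1 ?x0 //; last by lia.
  rewrite /W; have -> : (2 * t0 + 1 == 2 * t + 1)%N = false by apply/eqP; lia.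
  have -> : (2 * t0 + 1 == 2 * k - (2 * t + 1))%N = false by apply/eqP; lia.
  by rewrite /= mulr0 addr0 mulr0.
Qed.
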